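(* Let $B=\sum_{j=1}^{k-1}B_jz^{-j-1}dz\in O_B$ and suppose that for some $i\in\{1,\dots,k-1\}$ we have $B_{k-j}\in\mathfrak{h}_{k-j}$ for all $1\le j\le i$. Then $B_{k-j}=(dT)_{k-j}$ for all $1\le j\le i$.
   Context: Let $\mathfrak{g}=\mathfrak{gl}_n(\mathbb{C})$, $\mathfrak{t}$ a Cartan subalgebra, $k>1$, $T=\sum_{i=1}^{k-1}T_iz^{-i}$, $T_i\in\mathfrak{t}$, $T_{k-1}\ne0$, $dT=\sum_{i=1}^{k-1}(dT)_iz^{-i-1}dz$ with $(dT)_i=-iT_i$. $B_k=\{\sum_{i=0}^{k-1}b_iz^i:b_0=1\}\subset\mathrm{GL}_n(\mathbb{C}[z]/(z^k))$; $\mathfrak{b}_k^*=\{\sum_{i=1}^{k-1}X_iz^{-i-1}dz\}$ via $\mathrm{res}_{z=0}\mathrm{tr}$; coadjoint action $\mathrm{Ad}^*_bB$ = part of $bBb^{-1}$ in degrees $z^{-i-1}dz$, $1\le i\le k-1$; $O_B$ is the $B_k$-orbit of $dT$. $\mathfrak{h}_i=\bigcap_{j=i+1}^{k-1}\ker\mathrm{ad}_{T_j}$ for $0\le i\le k-2$ and $\mathfrak{h}_{k-1}=\mathfrak{g}$. *)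

(* Defs.v *)
From HB Require Import structures.
From mathcomp Require Import all_boot all_order all_algebra.
From mathcomp Require Import complex.
From mathcomp Require Import Rstruct.
From Stdlib Require Rdefinitions.
Set Implicit Arguments. Unset Strict Implicit. Unset Printing Implicit Defensive.
Import Order.TTheory GRing.Theory Num.Theory.
Local Open Scope ring_scope.

Notation CC := (complex Rdefinitions.R).

(* An element b = sum_{p<k} b_p z^p of GL_n(C[z]/(z^k)) is given by its
   coefficient sequence b : nat -> 'M_n (only b_0,...,b_{k-1} matter).
   b lies in B_k iff b_0 = 1. *)
Definition in_Bk (n k : nat) (b : nat -> 'M[CC]_n) : Prop := b 0%N = 1%:M.

(* c is the inverse of b in GL_n(C[z]/(z^k)) (two-sided). *)
Definition is_inv_trunc (n k : nat) (b c : nat -> 'M[CC]_n) : Prop :=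
  forall m : nat, (m < k)%N ->
    \sum_(p < m.+1) b p *m c (m - p)%N = (m == 0%N)%:R%:M /\
    \sum_(p < m.+1) c p *m b (m - p)%N = (m == 0%N)%:R%:M.

(* An element X = sum_{j=1}^{k-1} X_j z^{-j-1} dz of b_k^* is given by its
   coefficient sequence X : nat -> 'M_n (only X_1,...,X_{k-1} matter).
   coadj k b c X i is the coefficient of z^{-i-1} dz in b X c, where c = b^{-1}:
   it is  sum_{p,q >= 0, p+q+i <= k-1} b_p X_{p+q+i} c_q. *)
Definition coadj (n k : nat) (b c X : nat -> 'M[CC]_n) (i : nat) : 'M[CC]_n :=
  \sum_(p < k) \sum_(q < k)
     (if (p + q + i < k)%N then b p *m X (p + q + i)%N *m c q else 0).

Definition dT (n : nat) (T : nat -> 'M[CC]_n) (i : nat) : 'M[CC]_n :=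
  - (i%:R *: T i).

Definition in_OB (n k : nat) (T X : nat -> 'M[CC]_n) : Prop :=
  exists b c : nat -> 'M[CC]_n,
    in_Bk k b /\ is_inv_trunc k b c /\
    forall i : nat, (1 <= i <= k.-1)%N -> X i = coadj k b c (dT T) i.

Definition in_h (n k : nat) (T : nat -> 'M[CC]_n) (i : nat) (Y : 'M[CC]_n) : Prop :=
  forall j : nat, (i < j < k)%N -> Y *m T j = T j *m Y.

(* T_1, ..., T_{k-1} lie in a Cartan subalgebra t of gl_n(C), i.e. they are
   simultaneously diagonalizable (every Cartan subalgebra of gl_n(C) is a
   conjugate of the diagonal one). *)
Definition in_common_cartan (n k : nat) (T : nat -> 'M[CC]_n) : Prop :=
  exists P : 'M[CC]_n, P \in unitmx /\
    forall i : nat, (1 <= i <= k.-1)%N -> is_diag_mx (invmx P *m T i *m P).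

(* Main.v *)
Require Import Defs.
From HB Require Import structures.
From mathcomp Require Import all_boot all_order all_algebra.
From mathcomp Require Import complex Rstruct.
From mathcomp Require Import zify ring.
Set Implicit Arguments. Unset Strict Implicit. Unset Printing Implicit Defensive.
Import Order.TTheory GRing.Theory Num.Theory.
Local Open Scope ring_scope.


Lemma scal_step (F : fieldType) (m t : nat) (D : F) (beta w delta : nat -> F) :
 (forall l, (m < l <= m + t)%N -> D * delta l = 0) ->
 (forall p l, (1 <= p <= t)%N -> (m + p < l <= m + t)%N -> beta p * delta l = 0) ->
 (forall l, (m < l)%N -> w l != 0) ->
 D = \sum_(p < t) beta p.+1 * w (m + p.+1)%N * delta (m + p.+1)%N ->
 D = 0 /\ (forall p, (1 <= p <= t)%N -> beta p * delta (m + p)%N = 0).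
Proof.
move=> HD Hb Hw Heq.
pose P := fun l => (m < l <= m + t)%N && (delta l != 0).
have [/existsP [L0 PL0]|none] := boolP [exists l : 'I_(m+t).+1, P l].
  have exP : exists l, P l by exists L0.
  have ubP : forall l, P l -> (l <= m + t)%N by move=> l /andP[/andP[_ ->]].
  case: (ex_maxnP exP ubP) => L /andP[HL dL] maxL.
  have D0 : D = 0.
    by move: (HD L HL) => /eqP; rewrite mulf_eq0 (negPf dL) orbF => /eqP.
  have claimA : forall p, (1 <= p <= t)%N -> (m + p != L)%N -> beta p * delta (m + p)%N = 0.
    move=> p Hp Hne; case: (ltngtP (m + p) L) => Hc.
    - move: (Hb p L Hp); rewrite Hc; case/andP: HL => _ -> /(_ isT) /eqP.
      by rewrite mulf_eq0 (negPf dL) orbF => /eqP ->; rewrite mul0r.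
    - case: (eqVneq (delta (m + p)%N) 0) => [->|dn]; first by rewrite mulr0.
      have : P (m + p)%N by rewrite /P dn andbT; apply/andP; split; lia.
      by move/maxL; lia.
    - by rewrite Hc eqxx in Hne.
  split=> //.
  have Hs : \sum_(p < t) beta p.+1 * w (m + p.+1)%N * delta (m + p.+1)%N =
            \sum_(p < t | p == (L - m).-1 :> nat) beta p.+1 * w (m + p.+1)%N * delta (m + p.+1)%N.
    rewrite [RHS]big_mkcond; apply: eq_bigr => p _; case: eqP => // Hne.
    rewrite mulrAC claimA ?mul0r //; [apply/andP; split; [by []|exact: ltn_ord] | ].
    by apply/eqP => E; apply: Hne; lia.
  move: Heq; rewrite Hs (big_ord1_eq _ (fun p => beta p.+1 * w (m + p.+1)%N * delta (m + p.+1)%N)).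
  have -> : ((L - m).-1 < t)%N by lia.
  have -> : ((L - m).-1.+1 = L - m)%N by lia.
  have -> : (m + (L - m) = L)%N by lia.
  rewrite D0 => /esym/eqP; rewrite mulrAC mulf_eq0 (negPf (Hw L (proj1 (andP HL)))) orbF => /eqP HL0.
  move=> p Hp; case: (eqVneq (m + p)%N L) => [E|]; last exact: claimA.
  have -> : p = (L - m)%N by lia.
  by have -> : (m + (L - m) = L)%N by lia.
have Hz : forall l, (m < l <= m + t)%N -> delta l = 0.
  move=> l Hl; apply/eqP; apply/negPn/negP => dn.
  move/negP: none; apply; apply/existsP.
  have Hlt : (l < (m + t).+1)%N by lia.
  by exists (Ordinal Hlt); rewrite /P /= Hl dn.
split.
  rewrite Heq big1 // => p _; rewrite Hz ?mulr0 //.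
  have := ltn_ord p; lia.
move=> p Hp; rewrite Hz ?mulr0 //; lia.
Qed.


Section Core.
Variable F : numFieldType.

Lemma diagR n (A M : 'M[F]_n) a c : (forall x y, x != y -> M x y = 0) ->
  (A *m M) a c = A a c * M c c.
Proof.
move=> HM; rewrite !mxE (bigD1 c) //= big1 ?addr0 // => j /negPf Hj.
by rewrite HM ?mulr0 // Hj.
Qed.

Lemma diagL n (A M : 'M[F]_n) a c : (forall x y, x != y -> M x y = 0) ->
  (M *m A) a c = M a a * A a c.
Proof.
move=> HM; rewrite !mxE (bigD1 a) //= big1 ?addr0 // => j /negPf Hj.
by rewrite HM ?mul0r // eq_sym Hj.
Qed.

Lemma commE n (A M : 'M[F]_n) : (forall x y, x != y -> M x y = 0) ->
  (A *m M = M *m A <-> forall a c, A a c * (M c c - M a a) = 0).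
Proof.
move=> HM; split.
  move=> E a c; move/matrixP: E => /(_ a c); rewrite diagR // diagL // => E.
  by rewrite mulrBr E mulrC subrr.
move=> H; apply/matrixP => a c; rewrite diagR // diagL //.
by apply/eqP; rewrite -subr_eq0 [M a a * _]mulrC -mulrBr H.
Qed.

Lemma zlem (V : zmodType) (a b c d : V) : a + c = b + d -> a - b = d - c.
Proof. by move=> E; rewrite -[a](addrK c) E addrAC [b + d]addrC addrK. Qed.

Lemma core n (K : nat) (T b B : nat -> 'M[F]_n) (i : nat) :
  (forall l, (1 <= l <= K)%N -> forall x y, x != y -> T l x y = 0) ->
  (forall t, (t < K)%N -> \sum_(p < t.+1) B (K - (t - p))%N *m b p =
      \sum_(p < t.+1) b p *m (- ((K - (t - p))%:R *: T (K - (t - p))%N))) ->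
  b 0%N = 1%:M ->
  (i <= K)%N ->
  (forall t, (t < i)%N -> forall l, (K - t < l <= K)%N -> B (K - t)%N *m T l = T l *m B (K - t)%N) ->
  forall t, (t < i)%N -> B (K - t)%N = - ((K - t)%:R *: T (K - t)%N).
Proof.
move=> Hdiag HE Hb0 Hi Hh.
pose X l := - (l%:R *: T l).
have XdiagE : forall l, (1 <= l <= K)%N -> forall x y, X l x y = if x == y then - (l%:R * T l x x) else 0.
  move=> l Hl x y; rewrite /X !mxE; case: eqP => [->//|/eqP Hne]; by rewrite Hdiag ?mulr0 ?oppr0.
pose Inv t := (forall s, (s <= t)%N -> B (K - s)%N = X (K - s)%N) /\
   (forall p l, (1 <= p <= t)%N -> (K - t + p <= l <= K)%N -> b p *m T l = T l *m b p).
have step : forall t, (t < i)%N -> (forall s, (s < t)%N -> B (K - s)%N = X (K - s)%N) ->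
   (forall p l, (1 <= p <= t)%N -> (K - t + p < l <= K)%N -> b p *m T l = T l *m b p) -> Inv t.
  move=> t Hti H1 H2.
  have HtK : (t < K)%N by lia.
  have HEt := HE t HtK.
  rewrite big_ord_recl [in RHS]big_ord_recl /= Hb0 mulmx1 mul1mx subn0 in HEt.
  have HD : B (K - t)%N - X (K - t)%N = \sum_(j < t) (b j.+1 *m X (K - (t - j.+1))%N - X (K - (t - j.+1))%N *m b j.+1).
    rewrite sumrB; apply: zlem; apply: (etrans _ HEt); congr (_ + _).
    apply: eq_bigr => j _.
    by rewrite /bump /= add1n H1 //; have := ltn_ord j; lia.
  have key : forall x y, (B (K - t)%N - X (K - t)%N) x y = 0 /\
      (forall p, (1 <= p <= t)%N -> b p x y * (T (K - t + p)%N y y - T (K - t + p)%N x x) = 0).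
    move=> x y.
    apply: (@scal_step F (K - t) t _ (fun p => b p x y) (fun l => - l%:R) (fun l => T l y y - T l x x)).
    - move=> l Hl; rewrite !mxE.
      have /commE E := Hdiag l ltac:(lia).
      have := (proj1 (E (B (K - t)%N))) (Hh t Hti l ltac:(lia)) x y.
      rewrite mulrBl => ->; case: (eqVneq x y) => [->|Hxy]; first by rewrite subrr mulr0 subrr.
      have HK : (0 < K - t <= K)%N by lia.
      by rewrite (Hdiag _ HK x y Hxy) mulr0 oppr0 mul0r subrr.
    - move=> p l Hp Hl.
      have /commE E := Hdiag l ltac:(lia).
      exact: (proj1 (E (b p))) (H2 p l Hp ltac:(lia)) x y.
    - move=> l Hl; rewrite oppr_eq0 pnatr_eq0; lia.
    - rewrite HD summxE; apply: eq_bigr => j _.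
      have Hj := ltn_ord j.
      have -> : (K - (t - j.+1) = K - t + j.+1)%N by lia.
      have Hsub : forall (A C : 'M[F]_n) u v, (A - C) u v = A u v - C u v by move=> *; rewrite !mxE.
      have Hl : (0 < K - t + j.+1 <= K)%N by lia.
      have Xd : forall u v, u != v -> X (K - t + j.+1)%N u v = 0.
        by move=> u v Huv; rewrite /X !mxE (Hdiag _ Hl u v Huv) mulr0 oppr0.
      rewrite Hsub diagR // diagL //.
      rewrite !mxE; ring.
  split.
    move=> s Hs; case: (ltngtP s t) => Hst; first exact: H1; first lia.
    rewrite Hst; apply/matrixP => x y; have [/eqP + _] := key x y.
    by rewrite !mxE subr_eq0 => /eqP.
  move=> p l Hp Hl; case: (ltngtP (K - t + p) l) => Hc; first exact: H2 p l Hp ltac:(lia); first lia.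
  have /commE E := Hdiag l ltac:(lia).
  apply/(E (b p)) => x y; rewrite -Hc; exact: (proj2 (key x y)) p Hp.
have all : forall t, (t < i)%N -> Inv t.
  elim=> [|t IH] Hti.
    by apply: step => //; lia.
  have [IH1 IH2] := IH ltac:(lia).
  apply: step => //.
  move=> p l Hp Hl; apply: (IH2 p l).
  move: Hp Hl; clear; lia. lia.
by move=> t Ht; have [H _] := all t Ht; apply: H.
Qed.

End Core.


Section Poly.
Variables (F : fieldType) (N K : nat).
Local Notation M := ('M[F]_N.+1).

Lemma widen_if m n (G : nat -> M) : (m <= n)%N ->
  \sum_(i < n) (if (i < m)%N then G i else 0) = \sum_(i < m) G i.
Proof. by move=> H; rewrite (@big_ord_widen _ 0 +%R m n G H) [RHS]big_mkcond. Qed.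

Variables (b c Y : nat -> M).
Hypothesis Hinv : forall m, (m <= K)%N ->
  \sum_(p < m.+1) c p *m b (m - p)%N = (m == 0%N)%:R%:M.

Let pb := \poly_(i < K.+1) b i.
Let pc := \poly_(i < K.+1) c i.
Let pX := \poly_(i < K.+1) Y i.
Let Z := pb * (pX * pc).

Lemma ZE s : (s <= K)%N ->
  Z`_s = \sum_(p < s.+1) b p * \sum_(q < (s - p).+1) Y (s - p - q)%N * c q.
Proof.
move=> Hs; rewrite /Z coefM; apply: eq_bigr => p _.
have Hp := ltn_ord p.
rewrite coef_poly ifT; last by lia.
congr (_ * _); rewrite coefMr; apply: eq_bigr => q _.
have Hq := ltn_ord q.
by rewrite !coef_poly !ifT //; lia.
Qed.

Lemma ZbE t : (t <= K)%N ->
  \sum_(p < t.+1) Z`_(t - p) * b p = \sum_(p < t.+1) b p * Y (t - p)%N.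
Proof.
move=> Ht.
have E1 : \sum_(p < t.+1) Z`_(t - p) * b p = (Z * pb)`_t.
  rewrite coefMr; apply: eq_bigr => p _; have Hp := ltn_ord p.
  by rewrite coef_poly ifT //; lia.
rewrite E1 /Z !mulrA -(mulrA (pb * pX)) coefM big_ord_recr /= subnn.
have Hcb : forall u, (u <= K)%N -> (pc * pb)`_u = (u == 0%N)%:R%:M.
  move=> u Hu; rewrite coefM -Hinv //; apply: eq_bigr => p _; have Hp := ltn_ord p.
  by rewrite !coef_poly !ifT //; lia.
rewrite big1 ?add0r; last first.
  move=> s _; have Hs := ltn_ord s; rewrite Hcb; last by lia.
  rewrite (_ : (t - s == 0)%N = false); last by lia.
  by rewrite mulr0n raddf0 mulr0.
rewrite Hcb // mulr1n -mulmxE mulmx1 coefM; apply: eq_bigr => p _; have Hp := ltn_ord p.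
by rewrite !coef_poly !ifT //; lia.
Qed.

End Poly.

Lemma coadjE (N K : nat) (b c X : nat -> 'M[CC]_N.+1) s : (s < K)%N ->
  coadj K.+1 b c X (K - s)%N =
  \sum_(p < s.+1) b p * \sum_(q < (s - p).+1) X (K - (s - p - q))%N * c q.
Proof.
move=> Hs.
rewrite /coadj -(@widen_if CC N s.+1 K.+1 (fun p => b p * \sum_(q < (s - p).+1) X (K - (s - p - q))%N * c q)); last by lia.
apply: eq_bigr => p _; have Hp := ltn_ord p; case: ifP => Hps.
  rewrite mulr_sumr -(@widen_if CC N (s - p).+1 K.+1 (fun q => b p * (X (K - (s - p - q))%N * c q))); last by lia.
  apply: eq_bigr => q _; have Hq := ltn_ord q; case: ifP => Hc.
    rewrite ifT; last by lia.
    have -> : (p + q + (K - s) = K - (s - p - q))%N by lia.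
    by rewrite mulmxE mulrA.
  by rewrite ifF //; lia.
by rewrite big1 // => q _; rewrite ifF //; lia.
Qed.


Lemma main_pos (n' : nat) (k : nat) (T B : nat -> 'M[CC]_n'.+1) :
  (1 < k)%N -> in_common_cartan k T -> in_OB k T B ->
  forall i : nat, (1 <= i <= k.-1)%N ->
    (forall j : nat, (1 <= j <= i)%N -> in_h k T (k - j)%N (B (k - j)%N)) ->
    forall j : nat, (1 <= j <= i)%N -> B (k - j)%N = dT T (k - j)%N.
Proof.
case: k => [//|K] Hk [P [PU Pdiag]] [b [c [Hb0 [Hinv HB]]]] i Hi Hh j Hj.
rewrite /= in Hi HB Pdiag.
pose cj (A : 'M[CC]_n'.+1) := invmx P *m A *m P.
have cjM : forall A C, cj (A *m C) = cj A *m cj C.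
  move=> A C; rewrite /cj !mulmxA -(mulmxA _ P (invmx P)) mulmxV // mulmx1.
  by rewrite -!mulmxA.
have cjS : forall m (G : 'I_m -> 'M[CC]_n'.+1), cj (\sum_(p < m) G p) = \sum_(p < m) cj (G p).
  by move=> m G; rewrite /cj mulmx_sumr mulmx_suml.
have cjX : forall l, cj (dT T l) = dT (fun l => cj (T l)) l.
  by move=> l; rewrite /cj /dT mulmxN mulNmx -scalemxAr -scalemxAl.
have uncj : forall A, P *m cj A *m invmx P = A.
  by move=> A; rewrite /cj !mulmxA mulmxV // mul1mx -mulmxA mulmxV // mulmx1.
have HE0 : forall t, (t < K)%N -> \sum_(p < t.+1) B (K - (t - p))%N *m b p =
      \sum_(p < t.+1) b p *m dT T (K - (t - p))%N.
  move=> t Ht.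
  have Hinv' : forall m, (m <= K)%N -> \sum_(p < m.+1) c p *m b (m - p)%N = (m == 0%N)%:R%:M.
    by move=> m Hm; have [_ ->] := Hinv m ltac:(lia).
  have := @ZbE CC n' K b c (fun u => dT T (K - u)%N) Hinv' t ltac:(lia).
  move=> E; apply: etrans (etrans _ E) _.
    apply: eq_bigr => p _; have Hp := ltn_ord p.
    rewrite ZE; last by lia.
    rewrite HB; last by lia.
    by rewrite coadjE //; lia.
  by [].
have Hd : forall l, (1 <= l <= K)%N -> forall x y, x != y -> cj (T l) x y = 0.
  move=> l Hl x y Hxy; move/is_diag_mxP: (Pdiag l Hl); apply; exact: Hxy.
have HE' : forall t, (t < K)%N -> \sum_(p < t.+1) cj (B (K - (t - p))%N) *m cj (b p) =
      \sum_(p < t.+1) cj (b p) *m (- ((K - (t - p))%:R *: cj (T (K - (t - p))%N))).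
  move=> t Ht; have := HE0 t Ht => /(congr1 cj); rewrite !cjS.
  move=> E; apply: etrans (etrans _ E) _; first by apply: eq_bigr => p _; rewrite cjM.
  by apply: eq_bigr => p _; rewrite cjM cjX.
have Hb' : cj (b 0%N) = 1%:M by rewrite Hb0 /cj mulmx1 mulVmx.
have HiK : (i <= K)%N by lia.
have Hh' : forall t, (t < i)%N -> forall l, (K - t < l <= K)%N ->
    cj (B (K - t)%N) *m cj (T l) = cj (T l) *m cj (B (K - t)%N).
  move=> t Ht l Hl; rewrite -!cjM; congr cj.
  have := Hh t.+1 ltac:(lia) l; rewrite subSS; apply; lia.
have Hc := @core CC n'.+1 K (fun l => cj (T l)) (fun p => cj (b p)) (fun l => cj (B l)) i Hd HE' Hb' HiK Hh'.
have -> : (K.+1 - j = K - j.-1)%N by lia.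
rewrite -[B _]uncj (Hc j.-1) /=; last by lia.
have := cjX (K - j.-1)%N; rewrite /dT => <-; by rewrite uncj.
Qed.

Unset Implicit Arguments.

Theorem lemma3p12 (n k : nat) (T : nat -> 'M[CC]_n) (B : nat -> 'M[CC]_n) :
  (1 < k)%N ->
  in_common_cartan k T ->
  T k.-1 != 0 ->
  in_OB k T B ->
  forall i : nat, (1 <= i <= k.-1)%N ->
    (forall j : nat, (1 <= j <= i)%N -> in_h k T (k - j)%N (B (k - j)%N)) ->
    forall j : nat, (1 <= j <= i)%N -> B (k - j)%N = dT T (k - j)%N.
Proof.
case: n T B => [|n'] T B.
  by move=> *; apply/matrixP => -[].
by move=> Hk Hc _; apply: main_pos.
Qed.
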